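(* Let $X_1,\ldots,X_n$ be (arbitrary, possibly dependent) $\{0,1\}$-valued random variables. Let $K\subsetneq[n]$ and $a_K\in\{0,1\}^K$ with $\Pr[X_K=a_K]>0$. Then there exists $i\in[n]\setminus K$ such that either $X_i$ is almost surely constant conditioned on $X_K=a_K$, or both events $\{X_K=a_K, X_i=0\}$ and $\{X_K=a_K,X_i=1\}$ have positive probability and $$\sum_{\ell\in[n]\setminus(K\cup\{i\})}\Big(\mathbb{E}[X_\ell\mid X_K=a_K, X_i=0]-\mathbb{E}[X_\ell\mid X_K=a_K, X_i=1]\Big)\le 1.$$
   Context: For $S\subseteq[n]$, $X_S\in\{0,1\}^S$ denotes the tuple $(X_i)_{i\in S}$. *)

(* Defs.v *)
From HB Require Import structures.
From mathcomp Require Import all_boot all_order all_algebra.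
Set Implicit Arguments. Unset Strict Implicit. Unset Printing Implicit Defensive.
Import Order.TTheory GRing.Theory Num.Theory.
Local Open Scope ring_scope.

Definition is_prob (R : realFieldType) (Omega : finType) (p : Omega -> R) : Prop :=
  (forall w, 0 <= p w) /\ \sum_(w : Omega) p w = 1.

Definition Pr (R : realFieldType) (Omega : finType) (p : Omega -> R)
  (A : pred Omega) : R := \sum_(w : Omega | A w) p w.

Definition condE (R : realFieldType) (Omega : finType) (p : Omega -> R)
  (Y : Omega -> R) (A : pred Omega) : R :=
  (\sum_(w : Omega | A w) p w * Y w) / Pr p A.

Definition evK (n : nat) (Omega : finType) (X : 'I_n -> Omega -> bool)
  (K : {set 'I_n}) (a : 'I_n -> bool) : pred Omega :=
  fun w => [forall k in K, X k w == a k].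

(* Main.v *)
Require Import Defs.
From HB Require Import structures.
From mathcomp Require Import all_boot all_order all_algebra.
From mathcomp Require Import ring lra.
Import Order.TTheory GRing.Theory Num.Theory.
Local Open Scope ring_scope.
Lemma key (R : realFieldType) (I Omega : finType) (A : pred Omega) (q : Omega -> R)
  (J : pred I) (g : I -> Omega -> R) :
  (forall w, 0 <= q w) -> 0 < \sum_(w | A w) q w ->
  0 <= \sum_(i in J) \sum_(l in J)
     ((\sum_(w | A w) q w) * (\sum_(w | A w) q w * (g l w * g i w))
      - (\sum_(w | A w) q w * g i w) * (\sum_(w | A w) q w * g l w)).
Proof.
move=> q0 m0; set m := \sum_(w | A w) q w in m0 *.
set S := fun w => \sum_(l in J) g l w.
have ES : \sum_(i in J) \sum_(w | A w) q w * g i w = \sum_(w | A w) q w * S w.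
  rewrite exchange_big /=; apply: eq_bigr => w _; by rewrite /S mulr_sumr.
have ESS : \sum_(i in J) \sum_(l in J) \sum_(w | A w) q w * (g l w * g i w)
    = \sum_(w | A w) q w * (S w * S w).
  under eq_bigr do rewrite exchange_big /=.
  rewrite exchange_big /=; apply: eq_bigr => w _.
  rewrite /S /= big_distrlr /= mulr_sumr exchange_big /=; apply: eq_bigr => i _.
  rewrite mulr_sumr; apply: eq_bigr => l _; ring.
have -> : \sum_(i in J) \sum_(l in J)
     (m * (\sum_(w | A w) q w * (g l w * g i w))
      - (\sum_(w | A w) q w * g i w) * (\sum_(w | A w) q w * g l w))
   = m * (\sum_(w | A w) q w * (S w * S w))
     - (\sum_(w | A w) q w * S w) * (\sum_(w | A w) q w * S w).
  rewrite -ESS -ES mulr_sumr mulr_suml -sumrB; apply: eq_bigr => i _.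
  by rewrite mulr_sumr mulr_sumr -sumrB.
set e := \sum_(w | A w) q w * S w.
set s2 := \sum_(w | A w) q w * (S w * S w).
have H : 0 <= \sum_(w | A w) q w * (m * S w - e) ^+ 2.
  by apply: sumr_ge0 => w _; apply: mulr_ge0 => //; apply: sqr_ge0.
have E : \sum_(w | A w) q w * (m * S w - e) ^+ 2
   = m * m * s2 - (2 * m * e) * e + e ^+ 2 * m.
  rewrite (eq_bigr (fun w => (m * m) * (q w * (S w * S w)) - (2 * m * e) * (q w * S w)
                   + e ^+ 2 * q w)); last by move=> w _; ring.
  by rewrite big_split /= sumrB -!mulr_sumr.
rewrite E in H.
have : 0 <= m * (m * s2 - e * e) by lra.
by rewrite pmulr_rge0.
Qed.

Theorem mainTheorem2 (R : realFieldType) (Omega : finType) (p : Omega -> R)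
  (n : nat) (X : 'I_n -> Omega -> bool) (K : {set 'I_n}) (a : 'I_n -> bool) :
  is_prob p ->
  K \proper [set: 'I_n] ->
  0 < Pr p (evK X K a) ->
  exists i : 'I_n, i \notin K /\
    ((exists b : bool, Pr p (fun w => evK X K a w && (X i w != b)) = 0)
     \/
     (0 < Pr p (fun w => evK X K a w && (X i w == false)) /\
      0 < Pr p (fun w => evK X K a w && (X i w == true)) /\
      \sum_(l in ~: (i |: K))
         (condE p (fun w => (X l w)%:R) (fun w => evK X K a w && (X i w == false))
          - condE p (fun w => (X l w)%:R) (fun w => evK X K a w && (X i w == true)))
        <= 1)).
Proof.
move=> [p0 _] KT m0.
set A := evK X K a in m0 *.
set x := fun l w => (X l w)%:R : R.
set m := Pr p A in m0.
set E := fun F : Omega -> R => \sum_(w | A w) p w * F w.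
have [j jK] : exists j, j \in ~: K.
  move: KT; rewrite properE => /andP [_ /subsetPn [j _ jK]]; exists j.
  by rewrite in_setC.
pose f i := \sum_(l in ~: K) (m * E (fun w => x l w * x i w) - E (x i) * E (x l)).
have key' : 0 <= \sum_(i in ~: K) f i := key R 'I_n Omega A p (mem (~: K)) x p0 m0.
have [i iK fi] : exists2 i, i \in ~: K & 0 <= f i.
  case: (pickP (fun i => (i \in ~:K) && (0 <= f i))) => [i /andP[]|H]; first by exists i.
  exfalso.
  have Hj : f j < 0 by move: (H j); rewrite jK /= => /negbT; rewrite -ltNge.
  have Hr : \sum_(i in ~: K | i != j) f i <= 0.
    apply: sumr_le0 => i /andP [iK _]; move: (H i); rewrite iK /= => /negbT.
    by rewrite -ltNge => /ltW.
  move: key'; rewrite (bigD1 j) //=; lra.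
exists i; split; first by rewrite -in_setC.
have hP1 : Pr p (fun w => A w && (X i w == true)) = E (x i).
  rewrite /Pr big_mkcondr; apply: eq_bigr => w _; rewrite /x.
  by case: (X i w); rewrite ?mulr1 ?mulr0.
have hP0 : Pr p (fun w => A w && (X i w == false)) = m - E (x i).
  rewrite /m /Pr big_mkcondr /E -sumrB; apply: eq_bigr => w _; rewrite /x.
  by case: (X i w); rewrite /= ?mulr1 ?mulr0 ?subrr ?subr0.
have N1 : forall l, \sum_(w | A w && (X i w == true)) p w * (X l w)%:R
   = E (fun w => x l w * x i w).
  move=> l; rewrite big_mkcondr; apply: eq_bigr => w _; rewrite /x.
  by case: (X i w); rewrite /= ?mulr1 ?mulr0.
have N0 : forall l, \sum_(w | A w && (X i w == false)) p w * (X l w)%:R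
   = E (x l) - E (fun w => x l w * x i w).
  move=> l; rewrite big_mkcondr /E -sumrB; apply: eq_bigr => w _; rewrite /x.
  by case: (X i w); rewrite /= ?mulr1 ?mulr0 ?subrr ?subr0.
have Eii : E (fun w => x i w * x i w) = E (x i).
  by apply: eq_bigr => w _; rewrite /x; case: (X i w); rewrite ?mulr1 ?mulr0.
have P0ge : 0 <= Pr p (fun w => A w && (X i w == false)) by apply: sumr_ge0.
have P1ge : 0 <= Pr p (fun w => A w && (X i w == true)) by apply: sumr_ge0.
have [P0z|P0nz] := eqVneq (Pr p (fun w => A w && (X i w == false))) 0.
  left; exists true; rewrite -P0z /Pr; apply: eq_bigl => w /=.
  by case: (X i w); rewrite ?andbT ?andbF.
have [P1z|P1nz] := eqVneq (Pr p (fun w => A w && (X i w == true))) 0.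
  left; exists false; rewrite -P1z /Pr; apply: eq_bigl => w /=.
  by case: (X i w); rewrite ?andbT ?andbF.
right.
have P0p : 0 < Pr p (fun w => A w && (X i w == false)) by rewrite lt_def P0nz.
have P1p : 0 < Pr p (fun w => A w && (X i w == true)) by rewrite lt_def P1nz.
split => //; split => //.
rewrite /condE.
move: P0p P1p P0nz P1nz; rewrite hP0 hP1 => P0p P1p P0nz P1nz.
under eq_bigr do rewrite N0 N1.
rewrite (eq_bigl (fun l => (l \in ~: K) && (l != i))); last first.
  by move=> l; rewrite !in_setC in_setU1 negb_or andbC.
move: fi; rewrite /f (bigD1 i) //= Eii.
set T := \sum_(l in ~: K | l != i) _.
move=> fi.
rewrite (eq_bigr (fun l => - (m * E (fun w => x l w * x i w) - E (x i) * E (x l))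
                   / ((m - E (x i)) * E (x i)))); last first.
  move=> l _; field.
  by rewrite P0nz P1nz.
rewrite -mulr_suml sumrN ler_pdivrMr; last by apply: mulr_gt0.
rewrite -/T; lra.
Qed.
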